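(* In the setting described in the context, assume $N<\infty$ and $n$ is even. Then $$\frac{\sqrt2}4<\sqrt{\frac{(N-2)N^2}{8(N-1)^3}}\le\sigma f\big(\tfrac n2\big),$$ with equality in the second inequality iff $n=2$ or $n=N-2$.
   Context: Standing setting: Binomial law $\mathrm B_{m,p}(\{k\})=\binom mk p^k(1-p)^{m-k}$; hypergeometric law $\mathrm H_{m,r,b}(\{k\})=\binom rk\binom b{m-k}/\binom{r+b}m$ ($r,b\in\mathbb N_0$, $m\in\{0,\dots,r+b\}$, $k\in\mathbb Z$, binomial coefficients with non-integer lower index being $0$). $P$ is a symmetric (about its mean) hypergeometric or symmetric binomial law with mean $\frac n2$ and standard deviation $\sigma>0$, and $f(k)=P(\{k\})$; $N\in\mathbb N\cup\{\infty\}$ is a population size parameter of $P$ (i.e. $N=\infty$ and $P$ binomial, or $P=\mathrm H_{m,r,b}$ for some $r,b,m$ with $r+b=N$). *)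

(* Defs.v *)
From mathcomp Require Import all_boot all_order all_algebra.
From mathcomp Require Import reals.
Set Implicit Arguments. Unset Strict Implicit. Unset Printing Implicit Defensive.
Import Order.TTheory GRing.Theory Num.Theory.
Local Open Scope ring_scope.

(* Hypergeometric law H_{m,r,b}: weight of the integer point k (0 <= k <= m) *)
Definition hyp_w {R : realType} (r b m k : nat) : R :=
  (('C(r, k) * 'C(b, m - k))%:R) / ('C(r + b, m))%:R.

(* H_{m,r,b}({x}) for an arbitrary real x (0 off the support {0,..,m}) *)
Definition hyp_pmf {R : realType} (r b m : nat) (x : R) : R :=
  \sum_(k < m.+1) (if x == (k : nat)%:R then hyp_w r b m k else 0).

Definition hyp_mean {R : realType} (r b m : nat) : R :=
  \sum_(k < m.+1) (k : nat)%:R * hyp_w r b m k.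

Definition hyp_var {R : realType} (r b m : nat) : R :=
  \sum_(k < m.+1) ((k : nat)%:R - hyp_mean r b m) ^+ 2 * hyp_w r b m k.

Definition hyp_sd {R : realType} (r b m : nat) : R := Num.sqrt (hyp_var r b m).

(* Main.v *)
Require Import Defs.
From mathcomp Require Import all_boot all_order all_algebra.
From mathcomp Require Import reals.
From mathcomp Require Import ring lra zify.
Import Order.TTheory GRing.Theory Num.Theory.

Lemma shift_sum (F : nat -> nat) r b m :
  \sum_(k < m.+2) F k * k * 'C(r.+1, k) * 'C(b, m.+1 - k) =
  r.+1 * \sum_(i < m.+1) F i.+1 * 'C(r, i) * 'C(b, m - i).
Proof.
rewrite big_ord_recl /= muln0 !mul0n add0n big_distrr /=.
apply: eq_bigr => i _; rewrite /bump /= add1n subSS.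
have := mul_bin_diag r.+1 i => /= H.
rewrite -!mulnA [i.+1 * _]mulnA -H; ring.
Qed.

Lemma mom1 r b m :
  (\sum_(k < m.+1) k * 'C(r, k) * 'C(b, m - k)) * (r + b) = r * m * 'C(r + b, m).
Proof.
case: r => [|r].
  rewrite big1 ?mul0n // => k _; case: (nat_of_ord k) => [|k']; by rewrite ?mul0n ?muln0 ?bin0n.
case: m => [|m].
  by rewrite big_ord1 !mul0n muln0 mul0n.
have := shift_sum (fun _ => 1%N) r b m; rewrite /=.
under eq_bigr do rewrite mul1n.
move=> ->; under eq_bigr do rewrite mul1n.
rewrite binomial.Vandermonde.
have H := mul_bin_diag (r + b).+1 m; rewrite /= in H.
rewrite addSn.
transitivity (r.+1 * ((r + b).+1 * 'C(r + b, m))); first ring.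
rewrite H; ring.
Qed.

Lemma mom2 r b m :
  (\sum_(k < m.+1) k * (k - 1) * 'C(r, k) * 'C(b, m - k)) * ((r + b) * (r + b - 1))
  = r * (r - 1) * (m * (m - 1)) * 'C(r + b, m).
Proof.
case: (ltnP r 2) => Hr.
  rewrite big1 ?mul0n; last first.
    move=> k _; case: (nat_of_ord k) => [|[|k']]; rewrite ?mul0n //.
    by rewrite bin_small ?muln0 ?mul0n //; lia.
  by case: r Hr => [|[|]]; rewrite ?mul0n.
case: (ltnP m 2) => Hm.
  rewrite big1 ?mul0n; last first.
    move=> [k Hk] _ /=; case: k Hk => [|[|k']] Hk; rewrite ?mul0n //; lia.
  by case: m Hm => [|[|]] //= _; rewrite ?mul0n ?muln0.
case: r Hr => [|[|r]] // _; case: m Hm => [|[|m]] // _.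
have E1 := shift_sum (fun k => k - 1)%N r.+1 b m.+1.
have E2 := shift_sum (fun _ => 1%N) r b m.
rewrite /= in E1 E2.
rewrite (eq_bigr (fun k : 'I_m.+3 => (k-1) * k * 'C(r.+2,k) * 'C(b, m.+2 - k))%N); last first.
  by move=> k _; rewrite (mulnC (nat_of_ord k)).
rewrite E1.
rewrite (eq_bigr (fun k : 'I_m.+2 => 1 * k * 'C(r.+1,k) * 'C(b, m.+1 - k))%N); last first.
  by move=> k _; rewrite subSS subn0 mul1n.
rewrite E2 (eq_bigr (fun k : 'I_m.+1 => 'C(r,k) * 'C(b, m - k))%N); last first.
  by move=> k _; rewrite mul1n.
rewrite binomial.Vandermonde.
have H1 := mul_bin_diag (r + b).+1 m.
have H2 := mul_bin_diag (r + b).+2 m.+1.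
rewrite /= in H1 H2.
rewrite !addSn !subSS !subn0.
transitivity (r.+2 * r.+1 * ((r + b).+2 * ((r+b).+1 * 'C(r + b, m)))); first ring.
rewrite H1.
transitivity (r.+2 * r.+1 * (m.+1 * ((r + b).+2 * 'C((r + b).+1, m.+1)))); first ring.
rewrite H2; ring.
Qed.

Lemma rec_w r b m k : k < m ->
  'C(r, k.+1) * 'C(b, m - k.+1) * (k.+1 * (b - (m - k.+1))) =
  'C(r, k) * 'C(b, m - k) * ((r - k) * (m - k)).
Proof.
move=> Hk.
have E : m - k = (m - k.+1).+1 by lia.
have H1 := mul_bin_left r k.
have H2 := mul_bin_left b (m - k.+1).
rewrite E.
transitivity ((k.+1 * 'C(r, k.+1)) * ((b - (m - k.+1)) * 'C(b, m - k.+1))); first ring.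
rewrite H1 -H2; ring.
Qed.

Lemma swap_bin M j : j <= M ->
  'C(j.*2, j) * 'C(M.*2 - j.*2, M - j) * 'C(M.*2, j.*2) = 'C(M, j) ^ 2 * 'C(M.*2, M).
Proof.
move=> Hj.
have P : 0 < (j`! * (M - j)`!) ^ 2 by rewrite expn_gt0 muln_gt0 !fact_gt0.
apply/eqP; rewrite -(eqn_pmul2r P); apply/eqP.
have A := @bin_fact j.*2 j ltac:(lia).
have B := @bin_fact (M.*2 - j.*2) (M - j) ltac:(lia).
have C := @bin_fact M.*2 j.*2 ltac:(lia).
have D := @bin_fact M j Hj.
have E := @bin_fact M.*2 M ltac:(lia).
have e1 : j.*2 - j = j by lia.
have e2 : M.*2 - j.*2 - (M - j) = M - j by lia.
have e3 : M.*2 - M = M by lia.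
rewrite e1 in A; rewrite e2 in B; rewrite e3 in E.
transitivity ('C(M.*2, j.*2) * (('C(j.*2, j) * (j`! * j`!)) * ('C(M.*2 - j.*2, M - j) * ((M - j)`! * (M - j)`!)))); first ring.
rewrite A B C.
transitivity ('C(M.*2, M) * (('C(M, j) * (j`! * (M - j)`!)) ^ 2)); last by ring.
by rewrite D E.
Qed.

Lemma bin2M M : 'C(M.*2, 2) * 2 = M * (M.*2 - 1) * 2.
Proof.
have H1 := mul_bin_left M.*2 1.
have H0 := mul_bin_left M.*2 0.
rewrite bin0 muln1 mul1n subn0 in H0.
rewrite mulnC H1 H0; nia.
Qed.

Lemma bin_step2 M i : 'C(M.*2, i.*2.+2) * (i.*2.+2 * i.*2.+1) =
  'C(M.*2, i.*2) * ((M.*2 - i.*2) * (M.*2 - i.*2.+1)).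
Proof.
have H1 := mul_bin_left M.*2 i.*2.+1.
have H0 := mul_bin_left M.*2 i.*2.
transitivity ((i.*2.+1 * (i.*2.+2 * 'C(M.*2, i.*2.+2)))); first ring.
rewrite H1.
transitivity (((M.*2 - i.*2.+1) * (i.*2.+1 * 'C(M.*2, i.*2.+1)))); first ring.
rewrite H0; ring.
Qed.

Local Open Scope ring_scope.

Lemma natr_double (R : comPzRingType) n : (n.*2)%:R = 2 * n%:R :> R.
Proof. rewrite -addnn natrD; ring. Qed.

Section K.
Variable R : realType.
Variable M : nat.

Definition Dn (j : nat) : R := ('C(M, j) ^ 2)%:R / ('C(M.*2, j.*2))%:R.
Definition Vv (j : nat) : R := j%:R * (M%:R - j%:R) / (2 * M%:R - 1).
Definition G (j : nat) : R := Vv j * Dn j ^+ 2.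

Lemma Dn_gt0 j : (j <= M)%N -> 0 < Dn j.
Proof.
move=> Hj; apply: divr_gt0; rewrite ltr0n ?expn_gt0 bin_gt0 //; lia.
Qed.

Lemma G_gt0 j : (0 < j)%N -> (j < M)%N -> 0 < G j.
Proof.
move=> H0 H1; apply: mulr_gt0; last by rewrite exprn_gt0 // Dn_gt0 // ltnW.
have hj : (1 <= j%:R :> R) by rewrite ler1n.
have hM : (j%:R + 1 <= M%:R :> R) by rewrite natr1 ler_nat.
apply: divr_gt0; [apply: mulr_gt0|]; lra.
Qed.

Lemma G_sym j : (j <= M)%N -> G (M - j) = G j.
Proof.
move=> Hj; rewrite /G /Vv /Dn bin_sub // doubleB bin_sub ?leq_double //.
rewrite natrB //; congr (_ * _); ring.
Qed.

Lemma G_inc i : (0 < i)%N -> (i.*2.+2 <= M)%N -> G i < G i.+1.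
Proof.
move=> Hi HM.
set x : R := i%:R; set y : R := M%:R.
set d := ('C(M, i))%:R : R; set d' := ('C(M, i.+1))%:R : R.
set e := ('C(M.*2, i.*2))%:R : R; set e' := ('C(M.*2, i.*2.+2))%:R : R.
have hx : 1 <= x by rewrite ler1n.
have hy : 2 * x + 2 <= y.
  have : ((i.*2.+2)%:R <= y) by rewrite ler_nat.
  by rewrite -!natr1 natr_double /x; lra.
have hd : 0 < d by rewrite ltr0n bin_gt0; lia.
have he : 0 < e by rewrite ltr0n bin_gt0; lia.
have Ed : d' * (x + 1) = d * (y - x).
  have := congr1 (fun n => n%:R : R) (mul_bin_left M i).
  rewrite !natrM natrB; last lia.
  move=> H; rewrite -natr1 -/d -/d' -/x -/y in H.
  by rewrite mulrC H mulrC.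
have Ee : e' * ((2 * x + 2) * (2 * x + 1)) = e * ((2 * y - 2 * x) * (2 * y - 2 * x - 1)).
  have := congr1 (fun n => n%:R : R) (bin_step2 M i).
  rewrite !natrM !natrB; [|lia|lia].
  move=> H.
  rewrite -[(i.*2.+2)%:R]natr1 -[(i.*2.+1)%:R]natr1 !natr_double -/x -/y -/e -/e' in H.
  rewrite (_ : 2 * x + 2 = 2 * x + 1 + 1); last ring.
  rewrite H; ring.
have Ed' : d' = d * (y - x) / (x + 1) by rewrite -Ed mulfK //; lra.
have Ee' : e' = e * ((2 * y - 2 * x) * (2 * y - 2 * x - 1)) / ((2 * x + 2) * (2 * x + 1)).
  by rewrite -Ee mulfK //; apply/lt0r_neq0; nra.
have GI : G i = x * (y - x) / (2 * y - 1) * (d ^+ 2 / e) ^+ 2.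
  by rewrite /G /Vv /Dn natrX.
have GI1 : G i.+1 = (x + 1) * (y - (x + 1)) / (2 * y - 1) * (d' ^+ 2 / e') ^+ 2.
  by rewrite /G /Vv /Dn natrX -natr1 doubleS.
set num := (y - x - 1) * (y - x) * (2 * x + 1) ^+ 2.
set den := x * (x + 1) * (2 * y - 2 * x - 1) ^+ 2.
have Hden : 0 < den.
  rewrite /den; apply: mulr_gt0; first nra.
  by rewrite exprn_gt0 //; lra.
have EQ : G i.+1 = G i * (num / den).
  rewrite GI1 GI Ed' Ee' /num /den; field.
  rewrite -/x -/y -/e; repeat (apply/andP; split); apply/lt0r_neq0 => //; lra.
have Q1 : 1 < num / den.
  rewrite ltr_pdivlMr // mul1r -subr_gt0.
  have -> : num - den = (y - x - 1 - x) * (y - x - 1 + x + 1) by rewrite /num /den; ring.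
  apply: mulr_gt0; lra.
have Gp : 0 < G i by apply: G_gt0 => //; lia.
rewrite EQ -subr_gt0.
have -> : G i * (num / den) - G i = G i * (num / den - 1) by ring.
by apply: mulr_gt0 => //; rewrite subr_gt0.
Qed.


Lemma G_from1 j : (0 < j)%N -> (j.*2 <= M)%N -> G 1 <= G j /\ ((1 < j)%N -> G 1 < G j).
Proof.
elim: j => [//|[|k] IH] _ HM; first by split.
have [IH1 _] := IH isT ltac:(lia).
have H := @G_inc k.+1 isT ltac:(lia).
have Hs : G 1 < G k.+2 by apply: le_lt_trans IH1 H.
by split => //; apply: ltW.
Qed.

Lemma keyG j : (0 < j)%N -> (j < M)%N ->
  G 1 <= G j /\ (G 1 = G j <-> (j = 1 \/ j = M - 1)%N).
Proof.
move=> H0 H1.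
have GM1 : G (M - 1) = G 1 by rewrite G_sym //; lia.
case: (leqP j.*2 M) => Hj.
  have [A B] := @G_from1 j H0 Hj.
  split => //; split.
    move=> E; case: (ltnP 1 j) => Hj1; last by left; lia.
    by have := B Hj1; rewrite E ltxx.
  by case=> ->.
have Hs : G (M - j) = G j by rewrite G_sym //; lia.
have [A B] := @G_from1 (M - j) ltac:(lia) ltac:(lia).
rewrite -Hs; split => //; split.
  move=> E; case: (ltnP 1 (M - j)) => Hj1; last by right; lia.
  by have := B Hj1; rewrite E ltxx.
case=> E; first lia.
by rewrite E subKn ?GM1 //; lia.
Qed.

Lemma G1E : (0 < M)%N -> G 1 = (M%:R - 1) * M%:R ^+ 2 / (2 * M%:R - 1) ^+ 3.
Proof.
move=> HM.
have hy : 1 <= M%:R :> R by rewrite ler1n.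
have B : ('C(M.*2, 2))%:R = M%:R * (2 * M%:R - 1) :> R.
  have := congr1 (fun n => n%:R : R) (bin2M M).
  rewrite !natrM natrB; last lia.
  rewrite natr_double => H.
  apply: (mulIf (x := 2%:R)); first by rewrite pnatr_eq0.
  by rewrite H.
rewrite /G /Vv /Dn bin1 /= B natrX; field.
rewrite -/(M%:R); apply/andP; split; apply/lt0r_neq0; lra.
Qed.

End K.

Lemma final (R : realType) (M j : nat) : (0 < j)%N -> (j < M)%N ->
  let N : R := (M.*2)%:R in
  let c : R := Num.sqrt ((N - 2) * N ^+ 2 / (8 * (N - 1) ^+ 3)) in
  Num.sqrt 2 / 4 < c /\ c <= Num.sqrt (Vv R M j) * Dn R M j /\
  (c = Num.sqrt (Vv R M j) * Dn R M j <-> (j = 1 \/ j = M - 1)%N).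
Proof.
move=> H0 H1 N c.
have hy : 2 <= M%:R :> R by rewrite ler_nat; lia.
have hj : 1 <= j%:R :> R by rewrite ler1n.
have hjM : j%:R + 1 <= M%:R :> R by rewrite natr1 ler_nat.
have Vge0 : 0 <= Vv R M j.
  rewrite /Vv; apply: divr_ge0; [apply: mulr_ge0|]; lra.
have Dge0 : 0 <= Dn R M j by apply: ltW; apply: Dn_gt0; lia.
have SE : Num.sqrt (Vv R M j) * Dn R M j = Num.sqrt (G R M j).
  by rewrite /G (sqrtrM _ Vge0) sqrtr_sqr ger0_norm.
have CE : (N - 2) * N ^+ 2 / (8 * (N - 1) ^+ 3) = G R M 1.
  rewrite G1E; last lia.
  rewrite /N natr_double; field.
  apply/lt0r_neq0; lra.
have G1p : 0 < G R M 1 by apply: G_gt0; lia.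
have Gjp : 0 < G R M j by apply: G_gt0.
have [K1 K2] := @keyG R M j H0 H1.
rewrite SE /c CE; split; last split.
- have -> : Num.sqrt 2 / 4 = Num.sqrt (2 / 16) :> R.
    rewrite sqrtrM // (_ : 16^-1 = (4^-1) ^+ 2 :> R); last by rewrite exprVn; congr (_^-1); ring.
    by rewrite sqrtr_sqr ger0_norm // invr_ge0.
  rewrite ltr_sqrt // G1E; last lia.
  have h3 : 0 < (2 * M%:R - 1) ^+ 3 :> R by rewrite exprn_gt0 //; lra.
  rewrite ltr_pdivlMr // -subr_gt0.
  set y : R := M%:R.
  have -> : (y - 1) * y ^+ 2 - 2 / 16 * (2 * y - 1) ^+ 3 = (4 * y ^+ 2 - 6 * y + 1) / 8.
    by field.
  apply: divr_gt0 => //; nra.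
- by rewrite ler_sqrt // ltW.
- rewrite -K2; split => [/eqP|->//].
  by rewrite eqr_sqrt ?ltW // => /eqP.
Qed.

Lemma close (R : realType) (r b m : nat) (n : R) j M :
  (0 < j)%N -> (j < M)%N -> (r + b = M.*2)%N -> n = (2 * j)%:R ->
  hyp_sd r b m = Num.sqrt (Vv R M j) -> hyp_pmf r b m (n / 2) = Dn R M j ->
  let N : R := (r + b)%:R in
  let c : R := Num.sqrt ((N - 2) * N ^+ 2 / (8 * (N - 1) ^+ 3)) in
  Num.sqrt 2 / 4 < c /\
  c <= hyp_sd r b m * hyp_pmf r b m (n / 2) /\
  (c = hyp_sd r b m * hyp_pmf r b m (n / 2) <-> (n = 2 \/ n = N - 2)).
Proof.
move=> H0 H1 HN Hn Hsd Hp N c.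
have [F1 [F2 F3]] := final R M j H0 H1.
rewrite /c /N HN Hsd Hp; split => //; split => //.
rewrite F3 Hn; split.
- case=> ->; [left|right]; first by rewrite muln1.
  rewrite -[X in _ = X - _]/((M.*2)%:R) -(natrB _ (_ : 2 <= M.*2)%N); last lia.
  congr (_%:R); lia.
- case=> E; [left|right]; first by move/eqP: E; rewrite eqr_nat; lia.
  have : ((2 * j).+2)%:R = (M.*2)%:R :> R.
    by rewrite -addn2 natrD E; ring.
  by move/eqP; rewrite eqr_nat; lia.
Qed.

Lemma pmf_nat (R : realType) r b m k : (k <= m)%N ->
  hyp_pmf (R := R) r b m k%:R = hyp_w r b m k.
Proof.
move=> Hk; rewrite /hyp_pmf (bigD1 (Ordinal (Hk : (k < m.+1)%N))) //= eqxx.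
rewrite big1 ?addr0 // => i Hi.
rewrite eqr_nat; case: eqP => // E; move: Hi.
by rewrite -val_eqE /= E eqxx.
Qed.

Lemma sum_w (R : realType) r b m (F : nat -> R) :
  \sum_(k < m.+1) F k * hyp_w r b m k =
  (\sum_(k < m.+1) F k * ('C(r, k) * 'C(b, m - k))%:R) / ('C(r + b, m))%:R.
Proof. by rewrite mulr_suml; apply: eq_bigr => k _; rewrite /hyp_w mulrA. Qed.

Lemma natr_kk (R : realType) k : (k * (k - 1))%:R = k%:R * (k%:R - 1) :> R.
Proof. by case: k => [|k]; rewrite ?mul0n ?mul0r // natrM subn1 /= -natr1; ring. Qed.

Section Main.
Variable R : realType.
Variables r b m : nat.
Hypothesis Hm : (m <= r + b)%N.

Let S := 'C(r + b, m).
Let hS : 0 < S%:R :> R.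
Proof. by rewrite ltr0n bin_gt0. Qed.

Let A1 := hyp_mean (R := R) r b m.
Let A2 := \sum_(k < m.+1) (k%:R * (k%:R - 1)) * hyp_w (R := R) r b m k.

Lemma sumw1 : \sum_(k < m.+1) hyp_w (R := R) r b m k = 1.
Proof.
rewrite (eq_bigr (fun k : 'I_m.+1 => 1 * hyp_w r b m k)); last by move=> k _; rewrite mul1r.
rewrite (sum_w R r b m (fun _ => 1)) (eq_bigr (fun k : 'I_m.+1 => ('C(r, k) * 'C(b, m - k))%:R)); last by move=> k _; rewrite mul1r.
by rewrite -natr_sum binomial.Vandermonde divff // lt0r_neq0.
Qed.

Lemma A1E : A1 * (r + b)%:R = (r * m)%:R.
Proof.
rewrite /A1 /hyp_mean (sum_w R r b m (fun k => k%:R)).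
rewrite (eq_bigr (fun k : 'I_m.+1 => (k * 'C(r, k) * 'C(b, m - k))%:R)); last first.
  by move=> k _; rewrite -natrM mulnA.
rewrite -natr_sum mulrAC -natrM mom1 natrM mulfK //; exact: lt0r_neq0.
Qed.

Lemma A2E : A2 * ((r + b) * (r + b - 1))%:R = ((r * (r - 1)) * (m * (m - 1)))%:R.
Proof.
rewrite /A2 (sum_w R r b m (fun k => k%:R * (k%:R - 1))).
rewrite (eq_bigr (fun k : 'I_m.+1 => (k * (k - 1) * 'C(r, k) * 'C(b, m - k))%:R)); last first.
  by move=> k _; rewrite -natr_kk -natrM !mulnA.
rewrite -natr_sum mulrAC -natrM mom2 natrM mulfK //; exact: lt0r_neq0.
Qed.

Lemma varE : hyp_var (R := R) r b m = A2 + A1 - A1 ^+ 2.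
Proof.
rewrite /hyp_var -/A1.
transitivity (A2 + (1 - 2 * A1) * (\sum_(k < m.+1) (k : nat)%:R * hyp_w (R := R) r b m k)
  + A1 ^+ 2 * \sum_(k < m.+1) hyp_w (R := R) r b m k).
  rewrite /A2 (mulr_sumr _ _ _ (1 - 2 * A1)) (mulr_sumr _ _ _ (A1 ^+ 2)) -!big_split /=.
  by apply: eq_bigr => k _; ring.
have -> : \sum_(k < m.+1) (k : nat)%:R * hyp_w (R := R) r b m k = A1 by [].
rewrite sumw1; ring.
Qed.

End Main.

Lemma degen (R : realType) r b m : (m <= r + b)%N -> (r + b <= 1)%N ->
  hyp_var (R := R) r b m = 0.
Proof.
move=> Hm HN.
rewrite varE //.
have A2z : \sum_(k < m.+1) (k%:R * (k%:R - 1)) * hyp_w (R := R) r b m k = 0.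
  apply: big1 => [[k Hk]] _ /=.
  have : (k <= 1)%N by lia.
  by case: k {Hk} => [|[|]] //= _; rewrite ?mul0r // subrr mulr0 mul0r.
rewrite A2z add0r.
move: A2z => _; case: m Hm => [|[|m']] Hm; last lia.
- by rewrite /hyp_mean big_ord1 /= mul0r expr0n /= subrr.
- have := A1E R r b 1 Hm; rewrite (_ : r + b = 1)%N; last lia.
  rewrite mulr1 => ->.
  have : (r * 1 <= 1)%N by lia.
  by case: (r * 1)%N => [|[|]] //= _; rewrite ?expr0n ?expr1n subrr.
Qed.

Lemma pos_var (R : realType) r b m : (m <= r + b)%N -> 0 < hyp_sd (R := R) r b m ->
  [/\ (2 <= r + b)%N, (0 < m)%N, (0 < r)%N, (0 < b)%N & (m < r + b)%N] /\
  hyp_var (R := R) r b m = (m * r * b * (r + b - m))%:R / ((r + b) ^ 2 * (r + b - 1))%:R.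
Proof.
move=> Hm Hsd.
have Hv : 0 < hyp_var (R := R) r b m by rewrite -sqrtr_gt0.
case: (leqP (r + b) 1) => HN.
  by rewrite degen // ltxx in Hv.
set Nr : R := (r + b)%:R.
have EN1 : ((r + b) * (r + b - 1))%:R = Nr * (Nr - 1) by rewrite natr_kk.
have E1 := A1E R r b m Hm; have E2 := A2E R r b m Hm.
rewrite EN1 -/Nr in E2; rewrite -/Nr in E1.
rewrite natrM !natr_kk in E2.
have hN : 2 <= Nr by rewrite /Nr ler_nat.
have EV : hyp_var (R := R) r b m * (Nr ^+ 2 * (Nr - 1)) =
   m%:R * r%:R * b%:R * (Nr - m%:R).
  rewrite varE //.
  set a1 := hyp_mean r b m in E1 *.
  set a2 := \sum_(k < m.+1) _ in E2 *.
  transitivity ((a2 * (Nr * (Nr - 1))) * Nr + (a1 * Nr) * (Nr * (Nr - 1)) - (a1 * Nr) ^+ 2 * (Nr - 1)).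
    ring.
  rewrite E2 E1 natrM /Nr natrD; ring.
have Hd : 0 < Nr ^+ 2 * (Nr - 1) by apply: mulr_gt0; [apply: exprn_gt0|]; lra.
have EVd : hyp_var (R := R) r b m = m%:R * r%:R * b%:R * (Nr - m%:R) / (Nr ^+ 2 * (Nr - 1)).
  by rewrite -EV mulfK //; apply: lt0r_neq0.
have Hp : 0 < m%:R * r%:R * b%:R * (Nr - m%:R) :> R.
  by rewrite -EV; apply: mulr_gt0.
split.
  have Hmr : (m%:R : R) <= Nr by rewrite ler_nat.
  split => //.
  - case: (posnP m) => // E; by rewrite E !mul0r ltxx in Hp.
  - case: (posnP r) => // E; by rewrite E mulr0 !mul0r ltxx in Hp.
  - case: (posnP b) => // E; by rewrite E mulr0 mul0r ltxx in Hp.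
  - rewrite ltn_neqAle Hm andbT; apply/negP => /eqP E.
    by rewrite /Nr -E subrr mulr0 ltxx in Hp.
rewrite EVd !natrM natrB // natrB; last lia.
rewrite /Nr; field; apply/andP; split; apply/lt0r_neq0; rewrite -/Nr; lra.
Qed.

Theorem lemma4p2 (R : realType) (r b m : nat) (n : R) :
  (m <= r + b)%N ->
  hyp_mean r b m = n / 2 ->
  (forall x : R, hyp_pmf r b m x = hyp_pmf r b m (n - x)) ->
  0 < hyp_sd (R := R) r b m ->
  (exists j : nat, n = (2 * j)%:R) ->
  let N : R := (r + b)%:R in
  let c : R := Num.sqrt ((N - 2) * N ^+ 2 / (8 * (N - 1) ^+ 3)) in
  Num.sqrt 2 / 4 < c /\
  c <= hyp_sd r b m * hyp_pmf r b m (n / 2) /\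
  (c = hyp_sd r b m * hyp_pmf r b m (n / 2) <-> (n = 2 \/ n = N - 2)).
Proof.
move=> Hm Hmean Hsym Hsd [j Hn].
have [[HN2 Hm0 Hr0 Hb0 HmN] Hvar] := @pos_var R r b m Hm Hsd.
have Hn2 : n / 2 = j%:R by rewrite Hn natrM; field.
have Ej : (j * (r + b) = r * m)%N.
  have := A1E R r b m Hm; rewrite Hmean Hn2 -natrM => /eqP.
  by rewrite eqr_nat => /eqP.
have hj0 : (0 < j)%N by nia.
have hjm : (j < m)%N by nia.
have hjr : (j < r)%N by nia.
have hmjb : (m < j + b)%N by nia.
have [i Ei] : exists i, j = i.+1 by exists j.-1; lia.
have HS : ('C(r + b, m))%:R != 0 :> R by rewrite pnatr_eq0 -lt0n bin_gt0.
have Eu : ('C(r, j.+1) * 'C(b, m - j.+1) = 'C(r, i) * 'C(b, m - i))%N.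
  have := Hsym (j.+1)%:R.
  have -> : n - (j.+1)%:R = i%:R.
    by rewrite Hn -natrB; [congr (_%:R); lia | lia].
  rewrite !pmf_nat; [|lia|lia].
  rewrite /hyp_w => H; have := mulIf (invr_neq0 HS) H; move/eqP.
  by rewrite eqr_nat => /eqP.
have E1 := rec_w r b m j hjm.
have E2 := rec_w r b m i ltac:(lia).
rewrite -Ei in E2.
rewrite Eu in E1.
set u := ('C(r, i) * 'C(b, m - i))%N in E1 E2.
set v := ('C(r, j) * 'C(b, m - j))%N in E1 E2.
have hv : (0 < v)%N by rewrite /v muln_gt0 !bin_gt0; apply/andP; split; lia.
have [X [Y [B [Er Em Eb]]]] : exists X Y B : nat, [/\ (r = X + j)%N, (m = Y + j)%N & (b = B + Y)%N].
  by exists (r - j)%N, (m - j)%N, (b - (m - j))%N; split; lia.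
have e1 : (b - (m - j.+1) = B.+1)%N by lia.
have e2 : (r - j = X)%N by lia.
have e3 : (m - j = Y)%N by lia.
have e4 : (b - (m - j) = B)%N by lia.
have e5 : (r - i = X.+1)%N by lia.
have e6 : (m - i = Y.+1)%N by lia.
rewrite e1 e2 e3 in E1; rewrite e4 e5 e6 in E2.
have hX : (0 < X)%N by lia.
have hY : (0 < Y)%N by lia.
have P : (j * B = X * Y)%N by rewrite Er Em Eb in Ej; nia.
have hu : (0 < u)%N.
  case: (posnP u) => // E.
  have : (0 < v * (X * Y))%N by rewrite muln_gt0 hv muln_gt0 hX hY.
  by rewrite -E1 E mul0n.
have Q : (j.+1 * B.+1 = X.+1 * Y.+1)%N.
  apply/eqP; rewrite -(eqn_pmul2l hu); apply/eqP.
  by rewrite E1 -E2 P; ring.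
have Sm : (j + B = X + Y)%N by clear -Q P; nia.
have [EjX|EjY] : j = X \/ j = Y.
  have : (j%:R - X%:R) * (j%:R - Y%:R) = 0 :> R.
    have SR := congr1 (fun k => k%:R : R) Sm; have PR := congr1 (fun k => k%:R : R) P.
    rewrite /= !natrD in SR; rewrite /= !natrM in PR.
    transitivity (j%:R * j%:R - j%:R * (X%:R + Y%:R) + X%:R * Y%:R : R); first ring.
    rewrite -SR -PR; ring.
  move/eqP; rewrite mulf_eq0 !subr_eq0 !eqr_nat => /orP [] /eqP; by [left|right].
- (* case B: r = 2j, m = M, b = 2Y *)
  have EBY : B = Y by lia.
  apply: (@close R r b m n j m) => //; first lia.
  + rewrite /hyp_sd Hvar /Vv; congr (Num.sqrt _).
    rewrite Er Em Eb EBY -EjX.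
    have -> : (j + j + (Y + Y) - (Y + j) = Y + j)%N by lia.
    rewrite !natrM natrB; last lia.
    have hj1 : 1 <= j%:R :> R by rewrite ler1n.
    have hY1 : 1 <= Y%:R :> R by rewrite ler1n.
    rewrite ?natrX !natrD; field.
    by apply/andP; split; apply/lt0r_neq0; lra.
  + rewrite Hn2 pmf_nat; last lia.
    rewrite /hyp_w /Dn.
    have -> : r = j.*2 by lia.
    have -> : b = (m.*2 - j.*2)%N by lia.
    have -> : (j.*2 + (m.*2 - j.*2) = m.*2)%N by lia.
    apply/eqP; rewrite eqr_div ?pnatr_eq0 -?lt0n ?bin_gt0 ?leqnn; [|lia|lia].
    rewrite -!natrM eqr_nat -swap_bin; last lia.
    by apply/eqP; ring.
- (* case A: r = b = M, m = 2j *)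
  have EBX : B = X by lia.
  apply: (@close R r b m n j r) => //; first lia.
  + rewrite /hyp_sd Hvar /Vv; congr (Num.sqrt _).
    rewrite Er Em Eb EBX -EjY.
    have -> : (X + j + (X + j) - (j + j) = X + X)%N by lia.
    rewrite !natrM natrB; last lia.
    have hj1 : 1 <= j%:R :> R by rewrite ler1n.
    have hX1 : 1 <= X%:R :> R by rewrite ler1n.
    rewrite ?natrX !natrD; field.
    by apply/andP; split; apply/lt0r_neq0; lra.
  + rewrite Hn2 pmf_nat; last lia.
    rewrite /hyp_w /Dn.
    have -> : b = r by lia.
    have -> : m = j.*2 by lia.
    have -> : (j.*2 - j = j)%N by lia.
    by rewrite addnn mulnn.
Qed.
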